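(* Let $P=\forall x_1,\dots,x_n\,\exists y_1(D_1),\dots,y_k(D_k)$ be a topologically sorted prefix for $X$ and $Y$, let $G_{\mathrm{syn}}$ be an admissible group w.r.t. $P$, and let $G\subseteq G_{\mathrm{syn}}$ be a finite subset such that for all $g\in G$ and all $i,j\in\{1,\dots,k\}$: (1) $g(x)\in\operatorname{BF}(D_i)$ for all $x\in D_i$; (2) $g(y_i)\in\operatorname{BF}(\{y_j\mid D_j=D_i\})$; (3) if $D_i$ and $D_j$ are incomparable (neither $D_i\subseteq D_j$ nor $D_j\subseteq D_i$) and $g(y_i)\neq y_i$, then $g(y_j)=y_j$ and $g(x)=x$ for all $x\in D_j\setminus D_i$. Then \[\psi=\bigwedge_{g\in G}\bigwedge_{i=1}^{k}\Big(\Big(\bigwedge_{x\in D_i}(x\leftrightarrow g(x))\wedge\bigwedge_{j<i}(y_j\leftrightarrow g(y_j))\Big)\rightarrow\big(y_i\rightarrow g(y_i)\big)\Big)\] is a conjunctive symmetry breaker for the associated group of $G_{\mathrm{syn}}$.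
   Context: $X=\{x_1,\dots,x_n\}$, $Y=\{y_1,\dots,y_k\}$ are finite disjoint sets of propositional variables; for $V\subseteq X\cup Y$, $\operatorname{BF}(V)$ is the set of propositional formulas over $V$ (built from $\top,\bot$, variables and connectives); $\mathcal A(V)$ is the set of assignments $\sigma:V\to\{\top,\bot\}$ and $[\phi]_\sigma$ the truth value. A prefix $P=\forall x_1,\dots,x_n\,\exists y_1(D_1),\dots,y_k(D_k)$ has dependency sets $D_j\subseteq X$; it is topologically sorted if $D_i\subsetneq D_j$ implies $i<j$. An interpretation is $s=(s_1,\dots,s_k)$ with $s_j:\{\top,\bot\}^{|D_j|}\to\{\top,\bot\}$; $\mathcal S(P)$ is the set of interpretations. For $\sigma\in\mathcal A(X)$, the induced assignment $\sigma_s\in\mathcal A(X\cup Y)$ equals $\sigma$ on $X$ and $\sigma_s(y_j)=s_j$ evaluated at the values of $\sigma$ on $D_j$ (variables in increasing index order). For a DQBF $P.\phi$ ($\phi\in\operatorname{BF}(X\cup Y)$), $[P.\phi]_s=\bigwedge_{\sigma\in\mathcal A(X)}[\phi]_{\sigma_s}$. For a function $g:\operatorname{BF}(V)\to\operatorname{BF}(V)$ and $\sigma\in\mathcal A(V)$, $g(\sigma)\in\mathcal A(V)$ is $g(\sigma)(v)=[g(v)]_\sigma$; $g$ preserves propositional satisfiability if $[g(\phi)]_\sigma=[\phi]_{g(\sigma)}$ for all $\sigma,\phi$. A formula in $\operatorname{BF}(Y)$ depends on $x_i$ if it contains some $y_j$ with $x_i\in D_j$. A bijection $g:\operatorname{BF}(X\cup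 Y)\to\operatorname{BF}(X\cup Y)$ is admissible w.r.t. $P$ if it preserves propositional satisfiability, $g(x_i)\in\operatorname{BF}(X)$ and $g(y_j)\in\operatorname{BF}(Y)$ for all $i,j$, and whenever $g(y_j)$ depends on $x_i$ then $g^{-1}(x_i)\in\operatorname{BF}(D_j)$. An admissible group is a subgroup (under composition) of the group of all admissible functions. For admissible $g$ and $\sigma\in\mathcal A(X)$, $g(\sigma)\in\mathcal A(X)$ is defined by $g(\sigma)(x)=[g(x)]_\sigma$. The associated group $G_{\mathrm{sem}}$ of an admissible group $G_{\mathrm{syn}}$ is the set of all bijections $f:\mathcal S(P)\to\mathcal S(P)$ such that for every $s\in\mathcal S(P)$ and every $\sigma\in\mathcal A(X)$ there exists $g\in G_{\mathrm{syn}}$ with $g(\sigma)_{f(s)}=g(\sigma_s)$. Given a group $G_{\mathrm{sem}}$ of bijections of $\mathcal S(P)$, a formula $\psi\in\operatorname{BF}(X\cup Y)$ is a conjunctive symmetry breaker for $G_{\mathrm{sem}}$ if for every $s\in\mathcal S(P)$ there is $g\in G_{\mathrm{sem}}$ with $[P.\psi]_{g(s)}=\top$. *)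

(* Defs.v *)
From mathcomp Require Import all_boot.
Set Implicit Arguments. Unset Strict Implicit. Unset Printing Implicit Defensive.

Inductive var (n k : nat) : Type := XV of 'I_n | YV of 'I_k.
Arguments XV {n k}. Arguments YV {n k}.

Inductive form (n k : nat) : Type :=
| FTop | FBot | FVar of var n k | FNeg of form n k
| FAnd of form n k & form n k | FOr of form n k & form n k
| FImp of form n k & form n k | FIff of form n k & form n k.
Arguments FTop {n k}. Arguments FBot {n k}.

Section Defs.
Variables (n k : nat).
Local Notation var := (var n k).
Local Notation form := (form n k).

Fixpoint eval (s : var -> bool) (f : form) : bool :=
  match f with
  | FTop => true | FBot => false | FVar v => s v
  | FNeg a => ~~ eval s a
  | FAnd a b => eval s a && eval s b
  | FOr a b => eval s a || eval s b
  | FImp a b => eval s a ==> eval s b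
  | FIff a b => eval s a == eval s b
  end.

Fixpoint occurs (v : var) (f : form) : Prop :=
  match f with
  | FTop | FBot => False | FVar w => w = v
  | FNeg a => occurs v a
  | FAnd a b | FOr a b | FImp a b | FIff a b => occurs v a \/ occurs v b
  end.

Definition inBF (V : var -> Prop) (f : form) : Prop :=
  forall v, occurs v f -> V v.

Definition Xset (A : {set 'I_n}) : var -> Prop :=
  fun v => match v with XV i => i \in A | YV _ => False end.
Definition allX : var -> Prop := fun v => match v with XV _ => True | YV _ => False end.
Definition allY : var -> Prop := fun v => match v with XV _ => False | YV _ => True end.

Definition fun_asg (g : form -> form) (s : var -> bool) : var -> bool :=
  fun v => eval s (g (FVar v)).

Variable D : 'I_k -> {set 'I_n}.

Definition topsorted : Prop :=
  forall i j : 'I_k, D i \proper D j -> (i < j)%N.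

(* g(y_j) (a formula in BF(Y)) depends on x_i *)
Definition depends_on (f : form) (i : 'I_n) : Prop :=
  exists l : 'I_k, occurs (YV l) f /\ i \in D l.

Definition admissible (g : form -> form) : Prop :=
  [/\ bijective g,
      (forall s f, eval s (g f) = eval (fun_asg g s) f),
      (forall i, inBF allX (g (FVar (XV i)))),
      (forall j, inBF allY (g (FVar (YV j)))) &
      (* whenever g(y_j) depends on x_i, g^{-1}(x_i) lies in BF(D_j) *)
      (forall (j : 'I_k) (i : 'I_n), depends_on (g (FVar (YV j))) i ->
         forall f, g f = FVar (XV i) -> inBF (Xset (D j)) f)].

Definition admissible_group (Gs : (form -> form) -> Prop) : Prop :=
  [/\ (forall g, Gs g -> admissible g),
      Gs id,
      (forall g h, Gs g -> Gs h -> Gs (g \o h)) &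
      (forall g, Gs g -> exists h, [/\ Gs h, cancel g h & cancel h g])].

Definition interp := {dffun forall j : 'I_k, {ffun {ffun 'I_#|D j| -> bool} -> bool}}.

(* extension of sigma in A(X) to all variables (values of Y are irrelevant
   when evaluating formulas of BF(X)) *)
Definition extX (s : 'I_n -> bool) : var -> bool :=
  fun v => match v with XV i => s i | YV _ => false end.

(* induced assignment sigma_s; arguments of s_j are the values of D_j's
   variables in increasing index order (enum of a set of ordinals is sorted) *)
Definition induced (s : 'I_n -> bool) (t : interp) : var -> bool :=
  fun v => match v with
           | XV i => s i
           | YV j => t j [ffun p : 'I_#|D j| => s (enum_val p)]
           end.

Definition fun_asgX (g : form -> form) (s : 'I_n -> bool) : 'I_n -> bool :=
  fun i => eval (extX s) (g (FVar (XV i))).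

Definition sem_group (Gs : (form -> form) -> Prop) (f : interp -> interp) : Prop :=
  bijective f /\
  forall (t : interp) (s : 'I_n -> bool), exists g, Gs g /\
    forall v, induced (fun_asgX g s) (f t) v = fun_asg g (induced s t) v.

Definition dqbf_val (phi : form) (t : interp) : Prop :=
  forall s : 'I_n -> bool, eval (induced s t) phi.

Definition conj_symmetry_breaker (Gsem : (interp -> interp) -> Prop) (psi : form) : Prop :=
  forall t : interp, exists f, Gsem f /\ dqbf_val psi (f t).

Definition bigAnd (l : seq form) : form := foldr (@FAnd n k) FTop l.

Definition psi_of (G : seq (form -> form)) : form :=
  bigAnd [seq bigAnd [seq FImp
             (FAnd (bigAnd [seq FIff (FVar (XV x)) (g (FVar (XV x))) | x <- enum (D i)])
                   (bigAnd [seq FIff (FVar (YV j)) (g (FVar (YV j))) | j <- [seq j : 'I_k <- enum 'I_k | (j < i)%N]]))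
             (FImp (FVar (YV i)) (g (FVar (YV i)))) | i : 'I_k <- enum 'I_k] | g <- G].

Definition Yclass (i : 'I_k) : var -> Prop :=
  fun v => match v with XV _ => False | YV j => D j = D i end.

Definition side_conditions (g : form -> form) : Prop :=
  forall i j : 'I_k,
  [/\ (forall x, x \in D i -> inBF (Xset (D i)) (g (FVar (XV x)))),
      inBF (Yclass i) (g (FVar (YV i))) &
      (~ (D i \subset D j) -> ~ (D j \subset D i) -> g (FVar (YV i)) <> FVar (YV i) ->
         g (FVar (YV j)) = FVar (YV j) /\
         forall x, x \in D j :\: D i -> g (FVar (XV x)) = FVar (XV x))].

End Defs.

(* Main.v *)
Require Import Defs.
From mathcomp Require Import all_boot.
From Stdlib Require List.
From Stdlib Require Import Classical.
Set Implicit Arguments. Unset Strict Implicit. Unset Printing Implicit Defensive.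

Section Basic.
Variables (n k : nat).
Local Notation form := (form n k).
Local Notation var := (var n k).

Lemma eval_agree (s s' : var -> bool) (f : form) :
  (forall v, occurs v f -> s v = s' v) -> eval s f = eval s' f.
Proof.
elim: f => //= [v H|a IH H|a IHa b IHb H|a IHa b IHb H|a IHa b IHb H|a IHa b IHb H];
  try by rewrite IH.
- by apply: H.
all: by rewrite IHa ?IHb // => v Hv; apply: H; [right|left].
Qed.

Lemma eval_ext (s s' : var -> bool) (f : form) : s =1 s' -> eval s f = eval s' f.
Proof. by move=> H; apply: eval_agree => v _; apply: H. Qed.

Lemma evalX (s s' : var -> bool) (f : form) : inBF (@allX n k) f ->
  (forall i, s (XV i) = s' (XV i)) -> eval s f = eval s' f.
Proof. by move=> Hf H; apply: eval_agree => [[i|j]] /Hf //= _; apply: H. Qed.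

Lemma evalXset (A : {set 'I_n}) (s s' : var -> bool) (f : form) : inBF (@Xset n k A) f ->
  {in A, forall i, s (XV i) = s' (XV i)} -> eval s f = eval s' f.
Proof. by move=> Hf H; apply: eval_agree => [[i|j]] /Hf //= Hi; apply: H. Qed.

Lemma bigAnd_false {A : Type} (F : A -> form) l s :
  eval s (bigAnd (map F l)) = false -> exists a, List.In a l /\ eval s (F a) = false.
Proof.
elim: l => //= a l IH.
case E: (eval s (F a)) => /= H; last by exists a; split => //; left.
by case: (IH H) => b [Hb Hf]; exists b; split => //; right.
Qed.

Lemma bigAnd_true {A : Type} (F : A -> form) l s :
  eval s (bigAnd (map F l)) = true -> forall a, List.In a l -> eval s (F a) = true.
Proof.
elim: l => //= a l IH /andP [H1 H2] b [<-|Hb] //.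
exact: IH.
Qed.

Lemma In_mem (T : eqType) (x : T) (s : seq T) : x \in s -> List.In x s.
Proof.
elim: s => //= a s IH; rewrite in_cons => /orP [/eqP ->|H]; [left|right] => //.
exact: IH.
Qed.

End Basic.

Section Group.
Variables (n k : nat) (D : 'I_k -> {set 'I_n}).
Variable Gsyn : (form n k -> form n k) -> Prop.
Hypothesis HG : admissible_group D Gsyn.
Local Notation form := (form n k).
Local Notation var := (var n k).
Local Notation interp := (interp D).
Implicit Types (g : form -> form) (s : 'I_n -> bool).

Definition pt (s : 'I_n -> bool) (j : 'I_k) : {ffun 'I_#|D j| -> bool} :=
  [ffun p : 'I_#|D j| => s (enum_val p)].

Lemma inducedY s (t : interp) j : induced s t (YV j) = t j (pt s j).
Proof. by []. Qed.

Lemma pt_eq s s' j : pt s j = pt s' j <-> {in D j, s =1 s'}.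
Proof.
split.
- move=> E x Hx; have := congr1 (fun f : {ffun 'I_#|D j| -> bool} => f (enum_rank_in Hx x)) E.
  by rewrite !ffunE enum_rankK_in.
- by move=> H; apply/ffunP => p; rewrite !ffunE H // enum_valP.
Qed.

Lemma pt_ext s s' j : s =1 s' -> pt s j = pt s' j.
Proof. by move=> H; apply/pt_eq => x _; apply: H. Qed.

Lemma induced_ext s s' (t : interp) v : s =1 s' -> induced s t v = induced s' t v.
Proof. by move=> H; case: v => [i|j]; [apply: H|rewrite !inducedY (pt_ext _ H)]. Qed.

Lemma adm g : Gsyn g -> admissible D g.
Proof. by case: HG => H _ _ _ /H. Qed.

Lemma adm_eval g (s : var -> bool) f : Gsyn g -> eval s (g f) = eval (fun_asg g s) f.
Proof. by move=> /adm [] _ ->. Qed.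

Lemma adm_X g i : Gsyn g -> inBF (@allX n k) (g (FVar (XV i))).
Proof. by move=> /adm [] _ _ H _ _; apply: H. Qed.

Lemma fun_asgX_ext g s s' : s =1 s' -> fun_asgX g s =1 fun_asgX g s'.
Proof. by move=> H l; rewrite /fun_asgX; apply: eval_ext => [[i|j]] //=. Qed.

Lemma fun_asgX_induced g s (t : interp) l : Gsyn g ->
  fun_asgX g s l = eval (induced s t) (g (FVar (XV l))).
Proof. by move=> Hg; apply: evalX; [apply: adm_X|]. Qed.

Lemma fun_asgX_comp g1 g2 s : Gsyn g1 -> Gsyn g2 ->
  fun_asgX (g2 \o g1) s =1 fun_asgX g1 (fun_asgX g2 s).
Proof.
move=> H1 H2 l; rewrite /fun_asgX /= adm_eval //.
by apply: evalX; [apply: adm_X|].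
Qed.

Lemma fun_asgX_id s : fun_asgX (@id form) s =1 s.
Proof. by []. Qed.

Definition Rel (u u' : interp) := forall s, exists g, Gsyn g /\
  forall v, induced (fun_asgX g s) u' v = fun_asg g (induced s u) v.

Lemma Rel_refl u : Rel u u.
Proof. by move=> s; exists id; case: HG => _ Hid _ _; split => // [[i|j]]. Qed.

Lemma Rel_trans a b c : Rel a b -> Rel b c -> Rel a c.
Proof.
move=> Hab Hbc s; case: (Hab s) => g1 [G1 E1].
case: (Hbc (fun_asgX g1 s)) => g2 [G2 E2].
exists (g1 \o g2); split; first by case: HG => _ _ Hc _; apply: Hc.
move=> v; rewrite (induced_ext c v (fun_asgX_comp s G2 G1)) E2 /fun_asg /=.
rewrite [RHS](adm_eval _ _ G1); apply: eval_ext => w; by rewrite E1.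
Qed.

Lemma sem_of f : bijective f -> (forall t, Rel t (f t)) -> sem_group Gsyn f.
Proof. by move=> Hb HR; split. Qed.

Lemma sem_Rel f t : sem_group Gsyn f -> Rel t (f t).
Proof. by case=> _ H s; apply: H. Qed.

Lemma sem_id : sem_group Gsyn (@id interp).
Proof. by apply: sem_of => [|t]; [exists id|apply: Rel_refl]. Qed.

Lemma sem_comp (f1 f2 : interp -> interp) : sem_group Gsyn f1 -> sem_group Gsyn f2 -> sem_group Gsyn (f1 \o f2).
Proof.
move=> H1 H2; apply: sem_of; first by apply: bij_comp; [case: H1|case: H2].
by move=> t; apply: Rel_trans (sem_Rel _ H2) (sem_Rel _ H1).
Qed.

Definition swap (a b : interp) (x : interp) := if x == a then b else if x == b then a else x.

Lemma swapK a b : involutive (swap a b).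
Proof.
move=> x; rewrite /swap.
case: (eqVneq x a) => [->|Hxa]; first by case: (eqVneq b a) => [->|]; rewrite ?eqxx.
case: (eqVneq x b) => [->|Hxb]; first by rewrite eqxx.
by rewrite (negbTE Hxa) (negbTE Hxb).
Qed.

Lemma sem_swap a b : Rel a b -> Rel b a -> sem_group Gsyn (swap a b).
Proof.
move=> Hab Hba; apply: sem_of; first by exists (swap a b); apply: swapK.
move=> t; rewrite /swap.
case: (eqVneq t a) => [->|_] //; case: (eqVneq t b) => [->|_] //.
exact: Rel_refl.
Qed.


Section Descent.
Hypothesis Htop : topsorted D.
Variables (u : interp) (g h : form -> form) (s0 : 'I_n -> bool) (i : 'I_k).
Hypotheses (Hg : Gsyn g) (Hh : Gsyn h) (gh : cancel g h) (hg : cancel h g).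
Hypothesis Hsc : side_conditions D g.
Hypothesis HX : forall x, x \in D i ->
  eval (induced s0 u) (FVar (XV x)) = eval (induced s0 u) (g (FVar (XV x))).
Hypothesis HY : forall j : 'I_k, (j < i)%N ->
  eval (induced s0 u) (FVar (YV j)) = eval (induced s0 u) (g (FVar (YV j))).
Hypothesis Hyi : eval (induced s0 u) (FVar (YV i)) = true.
Hypothesis Hgyi : eval (induced s0 u) (g (FVar (YV i))) = false.

Definition inS s : bool := [forall x in D i, s x == s0 x].
Local Notation gs := (fun_asgX g).

Lemma inSP s : reflect {in D i, s =1 s0} (inS s).
Proof.
apply: (iffP forall_inP) => H x Hx; first by apply/eqP; apply: H.
by apply/eqP; apply: H.
Qed.

Lemma inS_ext s s' : s =1 s' -> inS s = inS s'.
Proof. by move=> E; apply/inSP/inSP => H x Hx; [rewrite -E; apply: H|rewrite E; apply: H]. Qed.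

Lemma S_inv s : inS s -> inS (gs s).
Proof.
move/inSP=> Hs; apply/inSP => x Hx.
have [H1 _ _] := Hsc i i.
rewrite /fun_asgX (@evalXset _ _ (D i) _ (extX s0)); last 2 first.
- exact: H1.
- by move=> l Hl /=; apply: Hs.
rewrite (@evalX _ _ _ (induced s0 u)); last 2 first.
- exact: adm_X.
- by [].
by rewrite -HX.
Qed.

Lemma inS0 : inS s0.
Proof. by apply/inSP. Qed.

Lemma WD s s' j : pt (gs s) j = pt (gs s') j ->
  eval (induced s u) (g (FVar (YV j))) = eval (induced s' u) (g (FVar (YV j))).
Proof.
move=> E; have [_ HYc _] := Hsc j j.
apply: eval_agree => v Hv; have := HYc _ Hv; case: v Hv => [l|m] Hv //= Dm.
congr (u m _); apply/pt_eq => x Hx.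
have [_ Hev _ _ Hdep] := adm Hg.
have Hf : inBF (Xset (D j)) (h (FVar (XV x))).
  by apply: (Hdep j x) => //; exists m.
have Hxs : forall s1, s1 x = eval (fun_asg g (extX s1)) (h (FVar (XV x))).
  by move=> s1; rewrite -Hev hg.
rewrite !Hxs; apply: (evalXset Hf) => l Hl /=.
by move/pt_eq: E => E; apply: E.
Qed.


Lemma gyi_neq : g (FVar (YV i)) <> FVar (YV i).
Proof. by move=> E; move: Hgyi; rewrite E Hyi. Qed.

Lemma gs_S s : inS s -> {in D i, gs s =1 s0}.
Proof. by move/S_inv/inSP. Qed.

Lemma Kfix s j : inS s -> ~~ (D i \subset D j) || (j < i)%N ->
  eval (induced s u) (g (FVar (YV j))) = u j (pt (gs s) j).
Proof.
move=> Hs Hor.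
case: (boolP (D j \subset D i)) => Hji.
- have ji : (j < i)%N.
    case/orP: Hor => // Hij; apply: Htop; rewrite properE Hji.
    exact: Hij.
  have E1 : pt (gs s) j = pt s0 j.
    by apply/pt_eq => x Hx; apply: gs_S => //; apply: (subsetP Hji).
  have E2 : pt (gs s0) j = pt s0 j.
    by apply/pt_eq => x Hx; apply: gs_S; [exact: inS0|apply: (subsetP Hji)].
  rewrite (WD (s' := s0)); last by rewrite E1 E2.
  by rewrite -HY // E1.
- case: (boolP (D i \subset D j)) => Hij.
    have := Htop (i := i) (j := j); rewrite properE Hij Hji => /(_ isT) ij.
    by case/orP: Hor; [rewrite Hij|rewrite ltnNge (ltnW ij)].
  have [_ _ H3] := Hsc i j.
  have [Eyj Ex] := H3 (negP Hij) (negP Hji) gyi_neq.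
  rewrite Eyj /=; congr (u j _); apply/pt_eq => x Hx.
  case: (boolP (x \in D i)) => Hxi.
  + by rewrite (gs_S Hs Hxi); move/inSP: Hs => ->.
  + by rewrite /fun_asgX Ex // inE Hxi.
Qed.

Definition u' : interp := [ffun j : 'I_k => [ffun tau : {ffun 'I_#|D j| -> bool} =>
   match [pick s : {ffun 'I_n -> bool} | inS s && (pt (gs s) j == tau)] with
   | Some s => eval (induced s u) (g (FVar (YV j)))
   | None => u j tau end]].

Lemma u'E j tau : u' j tau =
   match [pick s : {ffun 'I_n -> bool} | inS s && (pt (gs s) j == tau)] with
   | Some s => eval (induced s u) (g (FVar (YV j)))
   | None => u j tau end.
Proof. by rewrite /u' !ffunE. Qed.

Lemma ffE s : ([ffun x => s x] : 'I_n -> bool) =1 s.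
Proof. by move=> x; rewrite ffunE. Qed.

Lemma pick_none j tau s : inS s -> pt (gs s) j = tau ->
  (fun s' : {ffun 'I_n -> bool} => inS s' && (pt (gs s') j == tau)) =1 xpred0 -> False.
Proof.
move=> Hs E H; move: (H [ffun x => s x]) => /=.
rewrite (inS_ext (ffE s)) Hs /= -E (pt_ext j (fun_asgX_ext g (ffE s))) eqxx.
by [].
Qed.

Lemma noS s j : ~~ inS s -> u' j (pt s j) = u j (pt s j).
Proof.
move=> Hs; rewrite u'E; case: pickP => // s' /andP [Hs' /eqP E].
rewrite Kfix // -?E //.
apply/orP; left; apply/negP => Hij; move/negP: Hs; apply; apply/inSP => x Hx.
have Hxj : x \in D j by apply: (subsetP Hij).
move/pt_eq: E => /(_ x Hxj) <-.
exact: gs_S.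
Qed.

Lemma fwd s : inS s -> forall v, induced (gs s) u' v = fun_asg g (induced s u) v.
Proof.
move=> Hs [l|j]; first by rewrite /= (fun_asgX_induced _ u).
rewrite inducedY u'E; case: pickP => [s' /andP [Hs' /eqP E]|].
- by apply: WD.
- by move=> H; case: (pick_none Hs (erefl _) H).
Qed.

Lemma u'_lt (j : 'I_k) : (j < i)%N -> u' j = u j.
Proof.
move=> ji; apply/ffunP => tau; rewrite u'E; case: pickP => // s /andP [Hs /eqP E].
by rewrite Kfix // ?ji ?orbT // E.
Qed.

Lemma ptgs0 s : inS s -> pt (gs s) i = pt s0 i.
Proof. by move=> Hs; apply/pt_eq => x Hx; apply: gs_S. Qed.

Lemma u'_i : [set tau | u' i tau] \proper [set tau | u i tau].
Proof.
have Hval : forall s, inS s -> eval (induced s u) (g (FVar (YV i))) = false.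
  move=> s Hs; rewrite -Hgyi; apply: WD; by rewrite ptgs0 // ptgs0 // inS0.
apply/properP; split.
- apply/subsetP => tau; rewrite !inE u'E; case: pickP => // s /andP [Hs _].
  by rewrite Hval.
- exists (pt s0 i); rewrite !inE.
  + exact: Hyi.
  + rewrite u'E; case: pickP => [s /andP [Hs _]|]; first by rewrite Hval.
    by move=> H; case: (pick_none inS0 (ptgs0 inS0) H).
Qed.


Lemma surj s' : inS s' -> exists s : {ffun 'I_n -> bool}, inS s /\ gs s =1 s'.
Proof.
move=> Hs'.
pose Phi := fun c : {ffun 'I_n -> bool} => ([ffun l => gs c l] : {ffun 'I_n -> bool}).
have PhiE : forall c, (Phi c : 'I_n -> bool) =1 gs c by move=> c l; rewrite ffunE.
have Pinj : injective Phi.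
  move=> a b E; apply/ffunP => x.
  have K : forall c : {ffun 'I_n -> bool}, c x = fun_asgX h (gs c) x.
    by move=> c; rewrite -(fun_asgX_comp c Hh Hg) /fun_asgX /= hg.
  rewrite K (K b); apply: fun_asgX_ext => l.
  by have := congr1 (fun f : {ffun 'I_n -> bool} => f l) E; rewrite !ffunE.
pose A := [set s : {ffun 'I_n -> bool} | inS s].
have sub : Phi @: A \subset A.
  apply/subsetP => y /imsetP [c Hc ->]; rewrite inE in Hc *.
  by rewrite /A inE (inS_ext (PhiE c)); apply: S_inv.
have eqA : Phi @: A = A by apply/eqP; rewrite eqEcard sub (card_imset _ Pinj) leqnn.
have : [ffun x => s' x] \in Phi @: A by rewrite eqA inE (inS_ext (ffE s')).
case/imsetP => c Hc E; exists c; split; first by rewrite inE in Hc.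
by move=> x; have := congr1 (fun f : {ffun 'I_n -> bool} => f x) E; rewrite !ffunE => ->.
Qed.

Lemma Rel_fwd : Rel u u'.
Proof.
move=> s; case: (boolP (inS s)) => Hs.
- by exists g; split => //; exact: fwd.
- exists (@id form); split; first by case: HG.
  case=> [l|j] //.
  by rewrite inducedY (pt_ext j (fun_asgX_id s)) noS.
Qed.

Lemma Rel_bwd : Rel u' u.
Proof.
move=> s'; case: (boolP (inS s')) => Hs'.
- case: (surj Hs') => s [Hs E]; exists h; split => // v.
  have E2 : fun_asgX h s' =1 s.
    move=> x; rewrite -(fun_asgX_ext h E x) -(fun_asgX_comp s Hh Hg) /fun_asgX /= hg.
    by [].
  rewrite (induced_ext u v E2) /fun_asg.
  rewrite -(eval_ext (h (FVar v)) (fun w => induced_ext u' w E)).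
  rewrite (eval_ext (h (FVar v)) (fwd Hs)) -adm_eval // hg.
  by [].
- exists (@id form); split; first by case: HG.
  case=> [l|j] //.
  by rewrite inducedY (pt_ext j (fun_asgX_id s')) -noS.
Qed.

End Descent.
End Group.

From mathcomp Require Import zify.

Fixpoint enc (B : nat) (c : nat -> nat) (s m : nat) : nat :=
  if m is m'.+1 then c s * B ^ m' + enc B c s.+1 m' else 0.

Lemma enc_bound B c s m : (forall p, c p < B) -> enc B c s m < B ^ m.
Proof.
elim: m s => [|m IH] s Hc /=; first by rewrite expn0.
have := IH s.+1 Hc; have := Hc s; rewrite expnS.
move: (B ^ m) (enc B c s.+1 m) (c s) => X e a Ha He.
nia.
Qed.

Lemma enc_lt B c c' m : forall s i, (forall p, c p < B) -> (forall p, c' p < B) ->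
  s <= i < s + m -> (forall p, s <= p < i -> c' p = c p) -> c' i < c i ->
  enc B c' s m < enc B c s m.
Proof.
elim: m => [|m IH] s i Hc Hc' Hi Heq Hlt; first by lia.
rewrite /=; case: (eqVneq i s) => [E|Hne].
- subst i; have := enc_bound s.+1 m Hc'.
  move: (B ^ m) (enc B c' s.+1 m) (enc B c s.+1 m) (c s) (c' s) Hlt => X e' e a a' Hl He.
  nia.
- rewrite Heq; last by lia.
  rewrite ltn_add2l; apply: (IH s.+1 i) => //; first by lia.
  by move=> p Hp; apply: Heq; lia.
Qed.

Section Main.
Variables (n k : nat) (D : 'I_k -> {set 'I_n}).
Variable Gsyn : (form n k -> form n k) -> Prop.
Hypothesis HG : admissible_group D Gsyn.

Definition cnt (t : interp D) (j : 'I_k) := #|[set tau | t j tau]|.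
Definition Bnd := (\max_(j : 'I_k) #|[set: {ffun 'I_#|D j| -> bool}]|).+1.
Lemma cnt_lt t j : cnt t j < Bnd.
Proof.
rewrite ltnS; apply: leq_trans (subset_leq_card (subsetT _)) _.
exact: (leq_bigmax (F := fun j : 'I_k => #|[set: {ffun 'I_#|D j| -> bool}]|) j).
Qed.

Definition cn (t : interp D) (m : nat) :=
  if (insub m : option 'I_k) is Some j then cnt t j else 0.
Lemma cn_lt t p : cn t p < Bnd.
Proof. by rewrite /cn; case: insub => [j|//]; apply: cnt_lt. Qed.

Definition mu (t : interp D) := enc Bnd (cn t) 0 k.

Lemma mu_lt (u u' : interp D) (i : 'I_k) : (forall j : 'I_k, j < i -> u' j = u j) ->
  [set tau | u' i tau] \proper [set tau | u i tau] -> mu u' < mu u.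
Proof.
move=> Hlt Hpr; apply: (@enc_lt _ _ _ _ 0 i) => //; try exact: cn_lt.
- by rewrite add0n ltn_ord.
- move=> p /andP [_ Hp]; rewrite /cn; case: insubP => [j _ Ej|//].
  by rewrite /cnt Hlt // Ej.
- by rewrite /cn valK; apply: proper_card.
Qed.

Lemma main (G : seq (form n k -> form n k)) : topsorted D ->
  (forall g, List.In g G -> Gsyn g) -> (forall g, List.In g G -> side_conditions D g) ->
  @conj_symmetry_breaker n k D (sem_group Gsyn) (psi_of D G).
Proof.
move=> Htop HGG HSC t.
suff: forall m (v : interp D), mu v < m -> (exists f : interp D -> interp D, sem_group Gsyn f /\ f t = v) ->
    exists f : interp D -> interp D, sem_group Gsyn f /\ dqbf_val (psi_of D G) (f t).
  by move=> H; apply: (H (mu t).+1 t (ltnSn _)); exists id; split => //; exact: sem_id.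
elim=> // m IH v Hv [f [Hf Eft]].
case: (classic (dqbf_val (psi_of D G) v)) => Hpsi; first by exists f; rewrite Eft.
case: (not_all_ex_not _ _ Hpsi) => s0 /negP /negbTE Hs0.
case: (bigAnd_false Hs0) => g [HinG Hg0].
case: (bigAnd_false Hg0) => i [_ Hi0].
move: Hi0 => /= /negbT; rewrite negb_imply => /andP [/andP [HA HB]].
rewrite negb_imply => /andP [Hyi /negbTE Hgyi].
have Gg := HGG g HinG.
case: (HG) => _ _ _ Hinv; case: (Hinv g Gg) => h [Gh gh hg].
have HX : forall x, x \in D i ->
  eval (induced s0 v) (FVar (XV x)) = eval (induced s0 v) (g (FVar (XV x))).
  move=> x Hx; have Hin : List.In x (enum (D i)) by apply: In_mem; rewrite mem_enum.
  by move: (bigAnd_true HA Hin) => /= /eqP.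
have HY : forall j : 'I_k, j < i ->
  eval (induced s0 v) (FVar (YV j)) = eval (induced s0 v) (g (FVar (YV j))).
  move=> j Hj; have Hin : List.In j [seq j0 : 'I_k <- enum 'I_k | (j0 < i)%N].
    by apply: In_mem; rewrite mem_filter mem_enum andbT.
  by move: (bigAnd_true HB Hin) => /= /eqP.
have Hsc := HSC g HinG.
have R1 := Rel_fwd HG Htop Gg hg Hsc HX HY Hyi Hgyi.
have R2 := Rel_bwd HG Htop Gg Gh hg Hsc HX HY Hyi Hgyi.
have Hmu : mu (u' v g s0 i) < mu v.
  apply: (mu_lt (i := i)).
  - by move=> j Hj; apply: (u'_lt HG Htop Gg hg Hsc HX HY Hyi Hgyi).
  - exact: (u'_i HG Gg hg Hsc HX Hyi Hgyi).
apply: (IH (u' v g s0 i)); first by apply: leq_trans Hmu _.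
exists (swap v (u' v g s0 i) \o f); split; first exact: sem_comp (sem_swap HG R1 R2) Hf.
by rewrite /= Eft /swap eqxx.
Qed.

End Main.

Theorem theorem2 (n k : nat) (D : 'I_k -> {set 'I_n})
  (Gsyn : (form n k -> form n k) -> Prop) (G : seq (form n k -> form n k)) :
  topsorted D ->
  admissible_group D Gsyn ->
  (forall g, List.In g G -> Gsyn g) ->
  (forall g, List.In g G -> side_conditions D g) ->
  @conj_symmetry_breaker n k D (sem_group Gsyn) (psi_of D G).
Proof. by move=> Htop HG; apply: main. Qed.
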